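(* Let $(p,q)=(6/5,2)$. Then for every $x \in [0,\pi_{6/5,2}/2]$, \[ \sin_{6/5,2}{(2x)} =\sqrt{1-\left(\frac{9-8\sin_{6/5,2}^2{x}-4\sin_{6/5,2}^2{x}\,\cos_{6/5,2}^{2/5}{x}} {9-8\sin_{6/5,2}^2{x}+8\sin_{6/5,2}^2{x}\,\cos_{6/5,2}^{2/5}{x}}\right)^3}. \]
   Context: For $1<p,q<\infty$ let $F_{p,q}(x)=\int_0^x (1-t^q)^{-1/p}\,dt$ for $x\in[0,1]$, and $\pi_{p,q}=2F_{p,q}(1)$. The generalized sine $\sin_{p,q}$ is defined on $[0,\pi_{p,q}/2]$ as the inverse function of $F_{p,q}$ (an increasing function onto $[0,1]$), extended to $(\pi_{p,q}/2,\pi_{p,q}]$ by $\sin_{p,q}x=\sin_{p,q}(\pi_{p,q}-x)$, and to all of $\mathbb{R}$ as an odd $2\pi_{p,q}$-periodic function. It is $C^1$, and the generalized cosine is $\cos_{p,q}x := \frac{d}{dx}\sin_{p,q}x$; it satisfies $|\cos_{p,q}x|^p+|\sin_{p,q}x|^q=1$, and $\cos_{p,q}x\ge 0$ on $[0,\pi_{p,q}/2]$. *)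

(* Defs.v *)
From Stdlib Require Import Reals Lra ClassicalEpsilon.
From Coquelicot Require Import Coquelicot.
Open Scope R_scope.

(* Real power x^a for x > 0; set to 0 for x <= 0 (only used where this is
   harmless: at single points of integration, or with a > 0 at x = 0). *)
Definition rpow (x a : R) : R :=
  if Rlt_dec 0 x then Rpower x a else 0.

Definition integrand_pq (p q : R) (t : R) : R :=
  rpow (1 - rpow t q) (- / p).

Definition F_pq (p q : R) (x : R) : R :=
  if Rlt_dec x 1 then RInt (integrand_pq p q) 0 x
  else RInt_gen (integrand_pq p q) (at_point 0) (at_left 1).

Definition pi_pq (p q : R) : R := 2 * F_pq p q 1.

Definition sin_pq_base (p q : R) (x : R) : R :=
  epsilon (inhabits 0) (fun y => 0 <= y <= 1 /\ F_pq p q y = x).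

Definition sin_pq_half (p q : R) (x : R) : R :=
  if Rle_dec x (pi_pq p q / 2) then sin_pq_base p q x
  else sin_pq_base p q (pi_pq p q - x).

(* odd, 2 pi_{p,q}-periodic extension to all of R *)
Definition sin_pq (p q : R) (x : R) : R :=
  let P := pi_pq p q in
  let y := x - 2 * P * IZR (Int_part ((x + P) / (2 * P))) in
  (* y in [-P, P) and y = x mod 2P *)
  if Rle_dec 0 y then sin_pq_half p q y else - sin_pq_half p q (- y).

Definition cos_pq (p q : R) (x : R) : R := Derive (sin_pq p q) x.

(* Main.v *)
Require Import Defs.
From Stdlib Require Import Reals Lra Lia Classical ClassicalEpsilon.
From Coquelicot Require Import Coquelicot.
Open Scope R_scope.

Lemma ballR (x e y : R) : ball x e y <-> Rabs (y - x) < e.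
Proof. split; intro H; exact H. Qed.

Ltac ballR H := match type of H with ball ?x ?e ?y =>
  let H' := fresh in assert (H' : Rabs ((y:R) - (x:R)) < pos e) by exact H;
  clear H; rename H' into H; simpl in H; apply Rabs_def2 in H end.

Definition fa (t : R) : R := Rpower (1 - t^2) (-(5/6)).

Lemma fa_ex_derive t : -1 < t < 1 -> ex_derive fa t.
Proof. intros Ht. unfold fa, Rpower. auto_derive. nra. Qed.

Lemma fa_cont t : -1 < t < 1 -> continuous fa t.
Proof. intros; apply (@ex_derive_continuous R_AbsRing R_NormedModule), fa_ex_derive; auto. Qed.

Lemma fa_pos t : 0 < fa t.
Proof. unfold fa, Rpower. apply exp_pos. Qed.

Lemma fa_ge1 t : -1 < t < 1 -> 1 <= fa t.
Proof.
  intros Ht. unfold fa, Rpower.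
  assert (ln (1 - t^2) <= 0). { rewrite <- ln_1. apply ln_le; nra. }
  pose proof (exp_ineq1_le (-(5/6) * ln (1 - t^2))). nra.
Qed.

Lemma exp_le_mono x y : x <= y -> exp x <= exp y.
Proof. intros [H|H]. left; apply exp_increasing; auto. subst; lra. Qed.

Lemma fa_mono a b : 0 <= a <= b -> b < 1 -> fa a <= fa b.
Proof.
  intros Ha Hb. unfold fa, Rpower. apply exp_le_mono.
  assert (ln (1 - b^2) <= ln (1 - a^2)) by (apply ln_le; nra). nra.
Qed.

Definition Fr (y : R) : R := RInt fa 0 y.

Lemma Fr_derive y : -1 < y < 1 -> is_derive Fr y (fa y).
Proof.
  intros Hy. apply (is_derive_RInt fa Fr 0 y).
  - assert (He : 0 < Rmin (1 - y) (1 + y)) by (apply Rmin_pos; lra).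
    exists (mkposreal _ He). intros b Hb. apply ballR in Hb. simpl in Hb.
    assert (Hb1 : Rabs (b - y) < 1 - y) by (eapply Rlt_le_trans; [exact Hb| apply Rmin_l]).
    assert (Hb2 : Rabs (b - y) < 1 + y) by (eapply Rlt_le_trans; [exact Hb| apply Rmin_r]).
    apply Rabs_def2 in Hb1. apply Rabs_def2 in Hb2.
    unfold Fr. apply (@RInt_correct R_CompleteNormedModule). apply (@ex_RInt_continuous R_CompleteNormedModule).
    intros z Hz. apply fa_cont.
    split.
    + apply Rlt_le_trans with (Rmin 0 b); [|tauto]. apply Rmin_glb_lt; lra.
    + apply Rle_lt_trans with (Rmax 0 b); [tauto|]. apply Rmax_lub_lt; lra.
  - apply fa_cont; auto.
Qed.

Lemma derive_cont f x l : is_derive f x l -> continuity_pt f x.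
Proof.
  intros H. apply continuity_pt_filterlim.
  apply (@ex_derive_continuous R_AbsRing R_NormedModule). exists l; auto.
Qed.

Lemma mvt f df a b : a <= b -> (forall x, a <= x <= b -> is_derive f x (df x)) ->
  exists c, a <= c <= b /\ f b - f a = df c * (b - a).
Proof.
  intros Hab Hd.
  destruct (MVT_gen f a b df) as [c [Hc E]].
  - intros x Hx. rewrite Rmin_left in Hx by auto. rewrite Rmax_right in Hx by auto.
    apply Hd; lra.
  - intros x Hx. rewrite Rmin_left in Hx by auto. rewrite Rmax_right in Hx by auto.
    eapply derive_cont, Hd; lra.
  - rewrite Rmin_left in Hc by auto. rewrite Rmax_right in Hc by auto.
    exists c; auto.
Qed.

Lemma Fr_0 : Fr 0 = 0.
Proof. unfold Fr. rewrite RInt_point. reflexivity. Qed.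

Lemma Fr_lip a b : 0 <= a <= b -> b < 1 -> Fr b - Fr a >= (b - a) * fa a /\ Fr b - Fr a >= b - a.
Proof.
  intros Ha Hb.
  destruct (mvt Fr fa a b) as [c [Hc E]]; [lra| |].
  - intros x Hx. apply Fr_derive; lra.
  - rewrite E. pose proof (fa_mono a c). pose proof (fa_ge1 a). split; nra.
Qed.

Lemma Rpower_pos x y : 0 < Rpower x y.
Proof. unfold Rpower; apply exp_pos. Qed.

Lemma Fr_bound y : 0 <= y < 1 -> Fr y <= 6.
Proof.
  intros Hy.
  set (D := fun t => Fr t + 6 * exp (/6 * ln (1 - t))).
  destruct (mvt D (fun t => fa t - exp (-(5/6) * ln (1 - t))) 0 y) as [c [Hc E]]; [lra| |].
  - intros x Hx. unfold D. apply (is_derive_plus Fr).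
    + apply Fr_derive; lra.
    + evar (dd : R). assert (Hd : is_derive (fun t => 6 * exp (/ 6 * ln (1 - t))) x dd).
      { subst dd. auto_derive. lra. reflexivity. }
      subst dd. match type of Hd with is_derive _ _ ?v =>
        replace (- exp (- (5 / 6) * ln (1 - x))) with v; [exact Hd|] end.
      replace (- (5 / 6) * ln (1 - x)) with (/ 6 * ln (1 - x) + - ln (1 - x)) by field.
      rewrite exp_plus, exp_Ropp, exp_ln by lra.
      replace (1 + - x) with (1 - x) by ring. field. lra.
  - assert (fa c <= exp (- (5 / 6) * ln (1 - c))).
    { unfold fa, Rpower. apply exp_le_mono.
      assert (ln (1 - c) <= ln (1 - c^2)) by (apply ln_le; nra). nra. }
    unfold D in E. rewrite Fr_0 in E.
    replace (1 - 0) with 1 in E by ring. rewrite ln_1 in E.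
    replace (/6 * 0) with 0 in E by ring. rewrite exp_0 in E.
    pose proof (exp_pos (/ 6 * ln (1 - y))). nra.
Qed.
Lemma integrand_fa t : 0 <= t < 1 -> integrand_pq (6/5) 2 t = fa t.
Proof.
  intros Ht. unfold integrand_pq, rpow, fa.
  assert (Ep : - / (6/5) = -(5/6)) by field. rewrite Ep.
  destruct (Rlt_dec 0 t) as [Ht0|Ht0].
  - assert (E2 : Rpower t 2 = t^2).
    { replace 2 with (INR 2) by (simpl; ring). apply Rpower_pow; auto. }
    rewrite E2. destruct (Rlt_dec 0 (1 - t^2)); [reflexivity|]. exfalso; nra.
  - assert (t = 0) by lra. subst t.
    destruct (Rlt_dec 0 (1 - 0)); [|lra]. f_equal; ring.
Qed.

Definition E_set (z : R) : Prop := exists y, 0 <= y < 1 /\ z = Fr y.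

Lemma lub_approx m : is_lub E_set m -> forall eps, 0 < eps ->
  exists y0, 0 <= y0 < 1 /\ m - eps < Fr y0.
Proof.
  intros [Hub Hl] eps He.
  apply NNPP. intro Hn.
  assert (is_upper_bound E_set (m - eps)).
  { intros z [y [Hy Ez]]. subst z. apply Rnot_lt_le. intro Hc. apply Hn. exists y; auto. }
  specialize (Hl _ H). lra.
Qed.

Lemma Fr_ge0 y : 0 <= y < 1 -> 0 <= Fr y.
Proof. intros. destruct (Fr_lip 0 y) as [_ H1]; try lra. rewrite Fr_0 in H1. lra. Qed.

Lemma is_RInt_integrand y : 0 < y < 1 -> is_RInt (integrand_pq (6/5) 2) 0 y (Fr y).
Proof.
  intros Hy. apply (@is_RInt_ext R_NormedModule fa).
  - intros t Ht. rewrite Rmin_left in Ht by lra. rewrite Rmax_right in Ht by lra.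
    symmetry; apply integrand_fa; lra.
  - unfold Fr. apply (@RInt_correct R_CompleteNormedModule).
    apply (@ex_RInt_continuous R_CompleteNormedModule).
    intros z Hz. rewrite Rmin_left in Hz by lra. rewrite Rmax_right in Hz by lra.
    apply fa_cont; lra.
Qed.

Definition L := F_pq (6/5) 2 1.

Lemma L_lub : is_lub E_set L.
Proof.
  destruct (completeness E_set) as [m Hm].
  - exists 6. intros z [y [Hy Ez]]. subst z. apply Fr_bound; auto.
  - exists (Fr 0). exists 0. split; [lra|auto].
  - assert (HI : is_RInt_gen (integrand_pq (6/5) 2) (at_point 0) (at_left 1) m).
    { apply (filterlimi_lim_ext_loc (fun ab : R * R => Fr (snd ab))).
      - apply (Filter_prod _ _ _ (fun a => a = 0) (fun b => 0 < b < 1)).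
        + reflexivity.
        + assert (Hh : 0 < /2) by lra. exists (mkposreal _ Hh).
          intros b Hb Hb1. ballR Hb. lra.
        + intros a b Ha Hb. subst a. simpl. apply is_RInt_integrand; auto.
      - apply filterlim_locally. intros eps.
        destruct (lub_approx m Hm eps (cond_pos eps)) as [y0 [Hy0 Hf]].
        apply (Filter_prod _ _ _ (fun _ => True) (fun b => y0 < b < 1)).
        + exact I.
        + assert (Hh : 0 < 1 - y0) by lra. exists (mkposreal _ Hh).
          intros b Hb Hb1. ballR Hb. lra.
        + intros a b _ Hb. simpl. apply ballR.
          destruct (Fr_lip y0 b) as [_ H1]; try lra.
          assert (Fr b <= m). { apply (proj1 Hm). exists b. split; [lra|auto]. }
          apply Rabs_def1; lra. }
    unfold L, F_pq. destruct (Rlt_dec 1 1); [lra|].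
    rewrite (is_RInt_gen_unique _ m HI). auto.
Qed.

Definition F2 (y : R) : R := if Rlt_dec y 1 then Fr y else L.

Lemma F2_lt y : y < 1 -> F2 y = Fr y.
Proof. intros; unfold F2; destruct (Rlt_dec y 1); [auto|lra]. Qed.
Lemma F2_ge y : 1 <= y -> F2 y = L.
Proof. intros; unfold F2; destruct (Rlt_dec y 1); [lra|auto]. Qed.
Lemma F2_0 : F2 0 = 0.
Proof. rewrite F2_lt by lra. apply Fr_0. Qed.

Lemma Fr_le_L y : 0 <= y < 1 -> Fr y <= L.
Proof. intros. apply (proj1 L_lub). exists y; auto. Qed.

Lemma L_lower a : 0 <= a < 1 -> L - Fr a >= (1 - a) * fa a /\ L - Fr a >= 1 - a.
Proof.
  intros Ha.
  assert (H1 : L - Fr a >= (1 - a) * fa a).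
  { apply Rnot_lt_ge. intro Hc.
    pose proof (fa_pos a) as Hp.
    pose proof (Fr_le_L a Ha).
    set (b := (1 + (a + (L - Fr a) / fa a)) / 2).
    assert (Hq : (L - Fr a) / fa a < 1 - a).
    { apply (Rmult_lt_reg_r (fa a)); auto. unfold Rdiv. rewrite Rmult_assoc, Rinv_l by lra. lra. }
    assert (Hq0 : 0 <= (L - Fr a) / fa a).
    { unfold Rdiv. apply Rmult_le_pos; [lra|]. left; apply Rinv_0_lt_compat; auto. }
    assert (Hb : a <= b < 1) by (unfold b; lra).
    destruct (Fr_lip a b) as [H2 _]; try lra.
    assert (Fr b <= L) by (apply Fr_le_L; lra).
    assert ((b - a) * fa a > L - Fr a).
    { assert (H3 : b - a > (L - Fr a) / fa a) by (unfold b; lra).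
      apply Rmult_gt_compat_r with (r := fa a) in H3; auto.
      unfold Rdiv in H3. rewrite Rmult_assoc, Rinv_l in H3 by lra. lra. }
    lra. }
  split; auto. pose proof (fa_ge1 a). nra.
Qed.

Lemma L_ge1 : 1 <= L.
Proof. destruct (L_lower 0) as [_ H]; [lra|]. rewrite Fr_0 in H. lra. Qed.

Lemma F2_1 : F2 1 = L.
Proof. apply F2_ge; lra. Qed.

Lemma F2_mono a b : 0 <= a <= b -> b <= 1 -> F2 b - F2 a >= b - a.
Proof.
  intros Ha Hb. destruct (Rlt_dec b 1).
  - rewrite !F2_lt by lra. apply Fr_lip; lra.
  - assert (b = 1) by lra. subst b. rewrite F2_1.
    destruct (Rlt_dec a 1).
    + rewrite F2_lt by lra. apply L_lower; lra.
    + assert (a = 1) by lra. subst a. rewrite F2_1. lra.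
Qed.

Lemma F2_le_L y : 0 <= y <= 1 -> F2 y <= L.
Proof. intros. pose proof (F2_mono y 1). rewrite F2_1 in H0. lra. Qed.

Lemma F2_ge0 y : 0 <= y <= 1 -> 0 <= F2 y.
Proof. intros. pose proof (F2_mono 0 y). rewrite F2_0 in H0. lra. Qed.

Lemma F2_derive y : -1 < y < 1 -> is_derive F2 y (fa y).
Proof.
  intros Hy. apply (is_derive_ext_loc Fr).
  - assert (Hh : 0 < 1 - y) by lra. exists (mkposreal _ Hh).
    intros t Ht. ballR Ht.
    symmetry; apply F2_lt; lra.
  - apply Fr_derive; auto.
Qed.

Lemma F2_cont y : -1 < y <= 1 -> continuity_pt F2 y.
Proof.
  intros Hy. destruct (Rlt_dec y 1).
  - eapply derive_cont, F2_derive; lra.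
  - assert (y = 1) by lra. subst y.
    apply continuity_pt_locally. intros eps.
    destruct (lub_approx L L_lub eps (cond_pos eps)) as [y0 [Hy0 Hf]].
    assert (Hh : 0 < 1 - y0) by lra. exists (mkposreal _ Hh).
    intros u Hu. ballR Hu.
    rewrite F2_1. destruct (Rlt_dec u 1).
    + rewrite F2_lt by lra.
      destruct (Fr_lip y0 u) as [_ H1]; try lra.
      pose proof (Fr_le_L u). apply Rabs_def1; lra.
    + rewrite F2_ge by lra. rewrite Rminus_diag, Rabs_R0. apply cond_pos.
Qed.
Lemma F_pq_F2 y : 0 <= y <= 1 -> F_pq (6/5) 2 y = F2 y.
Proof.
  intros Hy. destruct (Rlt_dec y 1).
  - rewrite F2_lt by auto. unfold F_pq. destruct (Rlt_dec y 1); [|lra].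
    unfold Fr. apply RInt_ext. intros t Ht.
    rewrite Rmin_left in Ht by lra. rewrite Rmax_right in Ht by lra.
    apply integrand_fa; lra.
  - assert (y = 1) by lra. subst y. rewrite F2_1. reflexivity.
Qed.

Lemma F2_inj a b : 0 <= a <= 1 -> 0 <= b <= 1 -> F2 a = F2 b -> a = b.
Proof.
  intros Ha Hb E. destruct (Rle_dec a b).
  - pose proof (F2_mono a b). lra.
  - pose proof (F2_mono b a). lra.
Qed.

Lemma SB y : 0 <= y <= 1 -> sin_pq_base (6/5) 2 (F2 y) = y.
Proof.
  intros Hy. unfold sin_pq_base.
  pose proof (epsilon_spec (inhabits 0) (fun y' => 0 <= y' <= 1 /\ F_pq (6/5) 2 y' = F2 y)) as Hs.
  destruct Hs as [H1 H2].
  - exists y. split; auto. apply F_pq_F2; auto.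
  - rewrite F_pq_F2 in H2 by auto. apply F2_inj; auto.
Qed.

Lemma F2_surj z : 0 <= z <= L -> exists y, 0 <= y <= 1 /\ F2 y = z.
Proof.
  intros Hz. destruct (Req_dec z 0). { exists 0. split; [lra|]. rewrite F2_0; auto. }
  destruct (Req_dec z L). { exists 1. split; [lra|]. rewrite F2_1; auto. }
  destruct (Ranalysis5.IVT_interv (fun y => F2 y - z) 0 1) as [y [Hy E]].
  - intros a Ha. apply continuity_pt_minus. apply F2_cont; lra. apply continuity_pt_const. intros p q; auto.
  - lra.
  - rewrite F2_0. lra.
  - rewrite F2_1. lra.
  - exists y. split; auto. lra.
Qed.

Definition sb (z : R) := sin_pq_base (6/5) 2 z.

Lemma sb_spec z : 0 <= z <= L -> 0 <= sb z <= 1 /\ F2 (sb z) = z.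
Proof.
  intros Hz. destruct (F2_surj z Hz) as [y [Hy E]]. subst z. unfold sb. rewrite SB; auto.
Qed.

Lemma sbF y : 0 <= y <= 1 -> sb (F2 y) = y.
Proof. apply SB. Qed.

Lemma Ppq : pi_pq (6/5) 2 = 2 * L.
Proof. reflexivity. Qed.

Lemma Int_part0 r : 0 <= r < 1 -> Int_part r = 0%Z.
Proof.
  intros Hr. destruct (base_Int_part r) as [H1 H2].
  assert (IZR (Int_part r) < IZR 1) by (simpl; lra).
  assert (IZR (-1) < IZR (Int_part r)) by (simpl; lra).
  apply lt_IZR in H. apply lt_IZR in H0. lia.
Qed.

Lemma Int_part1 : Int_part 1 = 1%Z.
Proof.
  destruct (base_Int_part 1) as [H1 H2].
  assert (IZR (Int_part 1) < IZR 2) by (simpl; lra).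
  assert (IZR 0 < IZR (Int_part 1)) by (simpl; lra).
  apply lt_IZR in H. apply lt_IZR in H0. lia.
Qed.

Lemma sin_pq_eq z : 0 <= z < 2 * L ->
  sin_pq (6/5) 2 z = if Rle_dec z L then sb z else sb (2 * L - z).
Proof.
  intros Hz. pose proof L_ge1. unfold sin_pq. rewrite Ppq.
  rewrite (Int_part0 ((z + 2 * L) / (2 * (2 * L)))).
  2:{ split. apply Rmult_le_pos; [lra|]. left; apply Rinv_0_lt_compat; lra.
      apply (Rmult_lt_reg_r (2 * (2 * L))); [lra|]. unfold Rdiv.
      rewrite Rmult_assoc, Rinv_l by lra. lra. }
  replace (z - 2 * (2 * L) * IZR 0) with z by (simpl; ring).
  destruct (Rle_dec 0 z); [|lra]. unfold sin_pq_half. rewrite Ppq.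
  replace (2 * L / 2) with L by field. reflexivity.
Qed.

Lemma sin_pq_2L : sin_pq (6/5) 2 (2 * L) = 0.
Proof.
  pose proof L_ge1. unfold sin_pq. rewrite Ppq.
  replace ((2 * L + 2 * L) / (2 * (2 * L))) with 1 by (field; lra).
  rewrite Int_part1. replace (2 * L - 2 * (2 * L) * IZR 1) with (- (2 * L)) by (simpl; ring).
  destruct (Rle_dec 0 (- (2 * L))); [lra|]. unfold sin_pq_half. rewrite Ppq.
  rewrite Ropp_involutive.
  destruct (Rle_dec (2 * L) (2 * L / 2)); [lra|].
  replace (2 * L - 2 * L) with (F2 0) by (rewrite F2_0; ring).
  fold (sb (F2 0)). rewrite sbF by lra. ring.
Qed.
Lemma inv_close q d eps : 0 < d -> 0 < eps ->
  Rabs (q - d) < Rmin (d / 2) (eps * d^2 / 2) -> Rabs (/ q - / d) < eps.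
Proof.
  intros Hd He Hq.
  assert (H1 : Rabs (q - d) < d / 2) by (eapply Rlt_le_trans; [exact Hq|apply Rmin_l]).
  assert (H2 : Rabs (q - d) < eps * d^2 / 2) by (eapply Rlt_le_trans; [exact Hq|apply Rmin_r]).
  apply Rabs_def2 in H1. apply Rabs_def2 in H2.
  assert (Hq0 : 0 < q) by lra.
  replace (/ q - / d) with ((d - q) / (q * d)) by (field; lra).
  apply Rabs_def1.
  - apply (Rmult_lt_reg_r (q * d)). nra. unfold Rdiv. rewrite Rmult_assoc, Rinv_l by nra. nra.
  - apply (Rmult_lt_reg_r (q * d)). nra. unfold Rdiv. rewrite Rmult_assoc, Rinv_l by nra. nra.
Qed.

Lemma inv_deriv (Fn g : R -> R) a b x d : a < x < b ->
  (forall z, a < z < b -> Fn (g z) = z) ->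
  (forall z, a < z < b -> Rabs (g z - g x) <= Rabs (z - x)) ->
  derivable_pt_lim Fn (g x) d -> 0 < d -> derivable_pt_lim g x (/ d).
Proof.
  intros Hx HF Hl Hd Hd0 eps He.
  assert (He' : 0 < Rmin (d / 2) (eps * d^2 / 2)).
  { apply Rmin_pos; [lra|]. apply Rmult_lt_0_compat; [|lra]. apply Rmult_lt_0_compat; nra. }
  destruct (Hd _ He') as [eta Heta].
  assert (Hdel : 0 < Rmin eta (Rmin (x - a) (b - x))).
  { apply Rmin_pos. apply cond_pos. apply Rmin_pos; lra. }
  exists (mkposreal _ Hdel). intros h Hh0 Hh. simpl in Hh.
  assert (Hh1 : Rabs h < eta) by (eapply Rlt_le_trans; [exact Hh|apply Rmin_l]).
  assert (Hh2 : Rabs h < Rmin (x - a) (b - x)) by (eapply Rlt_le_trans; [exact Hh|apply Rmin_r]).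
  assert (Hh3 : Rabs h < x - a) by (eapply Rlt_le_trans; [exact Hh2|apply Rmin_l]).
  assert (Hh4 : Rabs h < b - x) by (eapply Rlt_le_trans; [exact Hh2|apply Rmin_r]).
  apply Rabs_def2 in Hh3. apply Rabs_def2 in Hh4.
  assert (Hz : a < x + h < b) by lra.
  set (k := g (x + h) - g x).
  assert (Hk0 : k <> 0).
  { intro Hk. apply Hh0. unfold k in Hk.
    assert (g (x + h) = g x) by lra.
    pose proof (HF _ Hz). pose proof (HF x Hx). rewrite H in H0. lra. }
  assert (Hk : Rabs k < eta).
  { eapply Rle_lt_trans; [|exact Hh1]. unfold k.
    replace h with (x + h - x) at 2 by ring. apply Hl; auto. }
  specialize (Heta k Hk0 Hk).
  replace (g x + k) with (g (x + h)) in Heta by (unfold k; ring).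
  rewrite (HF _ Hz), (HF _ Hx) in Heta.
  replace (x + h - x) with h in Heta by ring.
  replace (k / h) with (/ (h / k)) by (field; auto).
  apply inv_close; auto.
Qed.

Lemma sb_lip z x : 0 <= z <= L -> 0 <= x <= L -> Rabs (sb z - sb x) <= Rabs (z - x).
Proof.
  intros Hz Hx. destruct (sb_spec z Hz) as [Hz1 Ez]. destruct (sb_spec x Hx) as [Hx1 Ex].
  destruct (Rle_dec (sb x) (sb z)).
  - pose proof (F2_mono (sb x) (sb z)). rewrite Ez, Ex in H.
    rewrite !Rabs_right; lra.
  - pose proof (F2_mono (sb z) (sb x)). rewrite Ez, Ex in H.
    rewrite (Rabs_left1 (sb z - sb x)) by lra. rewrite Rabs_left1; lra.
Qed.

Lemma sin_pq_sb z : 0 <= z <= L -> sin_pq (6/5) 2 z = sb z.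
Proof.
  intros Hz. pose proof L_ge1. rewrite sin_pq_eq by lra.
  destruct (Rle_dec z L); [auto|lra].
Qed.

Lemma cos_interior x : 0 < x < L ->
  cos_pq (6/5) 2 x = / fa (sb x) /\ 0 < sb x < 1.
Proof.
  intros Hx. destruct (sb_spec x) as [Hs Es]; [lra|].
  assert (Hs' : 0 < sb x < 1).
  { split.
    - destruct (Req_dec (sb x) 0) as [E|E]; [|lra]. rewrite E, F2_0 in Es. lra.
    - destruct (Req_dec (sb x) 1) as [E|E]; [|lra]. rewrite E, F2_1 in Es. lra. }
  split; auto.
  unfold cos_pq. apply is_derive_unique. apply is_derive_Reals.
  apply (inv_deriv F2 _ 0 L).
  - auto.
  - intros z Hz. rewrite sin_pq_sb by lra. apply sb_spec; lra.
  - intros z Hz. rewrite !sin_pq_sb by lra. apply sb_lip; lra.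
  - rewrite sin_pq_sb by lra. apply is_derive_Reals. apply F2_derive; lra.
  - apply fa_pos.
Qed.

Lemma fa6 y : 0 <= y < 1 -> fa y ^ 6 = / (1 - y^2)^5.
Proof.
  intros Hy. unfold fa. rewrite <- Rpower_pow by (apply Rpower_pos).
  rewrite Rpower_mult. replace (INR 6) with 6 by (simpl; ring).
  replace (- (5 / 6) * 6) with (- INR 5) by (simpl; field).
  rewrite Rpower_Ropp, Rpower_pow by nra. reflexivity.
Qed.

Lemma near_top h : 0 <= h < L -> 1 - sb (L - h) <= 32 * h^6.
Proof.
  intros Hh. destruct (sb_spec (L - h)) as [Hy Ey]; [lra|].
  set (y := sb (L - h)) in *.
  destruct (Req_dec y 1) as [E|E]. { rewrite E. assert (0 <= h^6) by (apply pow_le; lra). lra. }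
  rewrite F2_lt in Ey by lra.
  destruct (L_lower y) as [H1 _]; [lra|].
  rewrite Ey in H1.
  assert (Hfa : 0 < fa y) by apply fa_pos.
  assert (H6 : ((1 - y) * fa y) ^ 6 <= h ^ 6) by (apply pow_incr; split; nra).
  rewrite Rpow_mult_distr, fa6 in H6 by lra.
  assert (E1 : (1 - y) ^ 6 * / (1 - y ^ 2) ^ 5 = (1 - y) / (1 + y)^5).
  { replace (1 - y^2) with ((1 - y) * (1 + y)) by ring. field. lra. }
  rewrite E1 in H6.
  assert (Hp : (1 + y) ^ 5 <= 32) by (replace 32 with (2^5) by ring; apply pow_incr; lra).
  assert (Hp0 : 0 < (1 + y) ^ 5) by (apply pow_lt; lra).
  assert (1 - y <= 32 * ((1 - y) / (1 + y) ^ 5)).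
  { unfold Rdiv. apply (Rmult_le_reg_r ((1 + y)^5)); auto.
    rewrite Rmult_assoc, Rmult_assoc, Rinv_l by lra. nra. }
  lra.
Qed.

Lemma cos_top : cos_pq (6/5) 2 L = 0.
Proof.
  pose proof L_ge1.
  assert (HL : sin_pq (6/5) 2 L = 1).
  { rewrite sin_pq_sb by lra. rewrite <- F2_1 at 1. apply sbF; lra. }
  unfold cos_pq. apply is_derive_unique. apply is_derive_Reals.
  intros eps He.
  assert (Hd : 0 < Rmin 1 (eps / 32)) by (apply Rmin_pos; lra).
  exists (mkposreal _ Hd). intros h Hh0 Hh. simpl in Hh.
  assert (Hh1 : Rabs h < 1) by (eapply Rlt_le_trans; [exact Hh|apply Rmin_l]).
  assert (Hh2 : Rabs h < eps / 32) by (eapply Rlt_le_trans; [exact Hh|apply Rmin_r]).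
  rewrite HL.
  assert (Hb : Rabs (sin_pq (6/5) 2 (L + h) - 1) <= 32 * (Rabs h)^6).
  { assert (Hs : sin_pq (6/5) 2 (L + h) = sb (L - Rabs h)).
    { destruct (Rle_dec 0 h).
      - rewrite Rabs_right by lra. rewrite sin_pq_eq by (apply Rabs_def2 in Hh1; lra).
        destruct (Rle_dec (L + h) L).
        + assert (h = 0) by lra. subst h. f_equal; ring.
        + f_equal; ring.
      - rewrite Rabs_left by lra. rewrite sin_pq_sb by (apply Rabs_def2 in Hh1; lra). f_equal; ring. }
    rewrite Hs. pose proof (Rabs_pos h).
    destruct (sb_spec (L - Rabs h)) as [Hy _]; [lra|].
    rewrite Rabs_left1 by lra. pose proof (near_top (Rabs h)). lra. }
  pose proof (Rabs_pos_lt h Hh0) as Hp.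
  replace ((sin_pq (6 / 5) 2 (L + h) - 1) / h - 0) with ((sin_pq (6 / 5) 2 (L + h) - 1) * / h) by (field; auto).
  rewrite Rabs_mult, Rabs_inv.
  apply (Rmult_lt_reg_r (Rabs h)); auto. rewrite Rmult_assoc, Rinv_l by lra.
  assert (Rabs h ^ 6 <= Rabs h ^ 2).
  { replace (Rabs h ^ 6) with (Rabs h ^ 2 * Rabs h ^ 4) by ring.
    assert (Rabs h ^ 4 <= 1). { replace 1 with (1 ^ 4) by ring. apply pow_incr; lra. }
    assert (0 <= Rabs h ^ 2) by (apply pow_le; lra). nra. }
  nra.
Qed.
Lemma cube_lt1 u : 0 <= u < 1 -> u^3 < 1.
Proof. intros. assert (u*u < 1) by nra. assert (u * u * u < 1) by nra. simpl. nra. Qed.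

Definition G (u : R) : R := F2 (sqrt (1 - u^3)).
Definition wq (u : R) : R := 2 * u^2 + 2 * u - 1.
Definition Dq (u : R) : R := -8 * u^4 + 8 * u^3 + 8 * u + 1.
Definition Kq (u : R) : R := 6 * (1 + 2 * u + 6 * u^2 - 4 * u^3 + 4 * u^4).
Definition rq (u : R) : R := wq u ^ 2 / Dq u.
Definition ustar : R := (sqrt 3 - 1) / 2.

Lemma Dq_pos u : 0 <= u <= 1 -> 1 <= Dq u.
Proof.
  intros Hu. unfold Dq. assert (u^4 <= u).
  { replace (u^4) with (u * u^3) by ring. assert (u^3 <= 1). { replace 1 with (1^3) by ring. apply pow_incr; lra. }
    assert (0 <= u^3) by (apply pow_le; lra). nra. }
  assert (0 <= u^3) by (apply pow_le; lra). lra.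
Qed.

Lemma Kq_pos u : 0 <= u <= 1 -> 0 < Kq u.
Proof. intros Hu. unfold Kq. nra. Qed.

Lemma rq_range u : 0 <= u <= 1 -> 0 <= rq u <= 1.
Proof.
  intros Hu. pose proof (Dq_pos u Hu). unfold rq. split.
  - apply Rmult_le_pos. apply pow2_ge_0. left; apply Rinv_0_lt_compat; lra.
  - apply (Rmult_le_reg_r (Dq u)); [lra|]. unfold Rdiv. rewrite Rmult_assoc, Rinv_l by lra.
    unfold wq, Dq. assert (u^4 <= u).
    { replace (u^4) with (u * u^3) by ring. assert (u^3 <= 1). { replace 1 with (1^3) by ring. apply pow_incr; lra. }
      assert (0 <= u^3) by (apply pow_le; lra). nra. }
    nra.
Qed.

Lemma rq_lt1 u : 0 < u < 1 -> rq u < 1.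
Proof.
  intros Hu. assert (Hu' : 0 <= u <= 1) by lra. pose proof (Dq_pos u Hu'). unfold rq.
  apply (Rmult_lt_reg_r (Dq u)); [lra|]. unfold Rdiv. rewrite Rmult_assoc, Rinv_l by lra.
  unfold wq, Dq. assert (u^4 < u).
  { replace (u^4) with (u * u^3) by ring. assert (u^3 < 1) by (apply cube_lt1; lra).
    nra. }
  nra.
Qed.

Lemma sqrt3_bounds : 1 < sqrt 3 < 3 /\ sqrt 3 * sqrt 3 = 3.
Proof.
  assert (E : sqrt 3 * sqrt 3 = 3) by (apply sqrt_sqrt; lra).
  pose proof (sqrt_pos 3). split; [split|]; nra.
Qed.

Lemma ustar_range : 0 < ustar < 1.
Proof. pose proof sqrt3_bounds. unfold ustar. lra. Qed.

Lemma wq_factor u : wq u = 2 * (u - ustar) * (u + (1 + sqrt 3) / 2).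
Proof. pose proof sqrt3_bounds as [_ E]. unfold wq, ustar. nra. Qed.

Lemma wq_ustar : wq ustar = 0.
Proof. rewrite wq_factor. ring. Qed.

Lemma wq_pos u : ustar < u -> 0 < wq u.
Proof. intros. rewrite wq_factor. pose proof sqrt3_bounds. pose proof ustar_range. nra. Qed.

Lemma wq_neg u : 0 <= u < ustar -> wq u < 0.
Proof. intros. rewrite wq_factor. pose proof sqrt3_bounds. pose proof ustar_range. nra. Qed.

Lemma rq_ustar : rq ustar = 0.
Proof. unfold rq. rewrite wq_ustar. unfold Rdiv. ring. Qed.

Lemma rq_1 : rq 1 = 1.
Proof. unfold rq, wq, Dq. field. Qed.

Lemma G_0 : G 0 = L.
Proof. unfold G. replace (1 - 0^3) with 1 by ring. rewrite sqrt_1. apply F2_1. Qed.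

Lemma G_1 : G 1 = 0.
Proof. unfold G. replace (1 - 1^3) with 0 by ring. rewrite sqrt_0. apply F2_0. Qed.

Lemma Rpower_u3 u : 0 < u -> Rpower (u^3) (-(5/6)) = / (u^2 * sqrt u).
Proof.
  intros Hu. rewrite <- (Rpower_pow 3) by auto. rewrite Rpower_mult.
  replace (INR 3 * - (5 / 6)) with (- (INR 2 + / 2)) by (simpl; field).
  rewrite Rpower_Ropp, Rpower_plus, Rpower_pow, Rpower_sqrt by auto. reflexivity.
Qed.

Definition Gd (u : R) : R := -3 / (2 * sqrt u * sqrt (1 - u^3)).

Lemma G_derive u : 0 < u < 1 -> is_derive G u (Gd u).
Proof.
  intros Hu.
  assert (Hu3 : 0 < u^3 < 1).
  { split. apply pow_lt; lra. apply cube_lt1; lra. }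
  assert (Hs : 0 < sqrt (1 - u^3)) by (apply sqrt_lt_R0; lra).
  assert (Hs1 : sqrt (1 - u^3) < 1).
  { assert (Hq : sqrt (1 - u^3) < sqrt 1) by (apply sqrt_lt_1_alt; lra). rewrite sqrt_1 in Hq. exact Hq. }
  assert (Hd1 : is_derive (fun u => sqrt (1 - u^3)) u (- (3 * u^2) / (2 * sqrt (1 - u^3)))).
  { auto_derive. lra. replace (1 + - (u * (u * (u * 1)))) with (1 - u^3) by ring. field. lra. }
  pose proof (is_derive_comp F2 (fun u => sqrt (1 - u^3)) u _ _ (F2_derive (sqrt (1 - u^3)) ltac:(lra)) Hd1) as Hc.
  unfold G. replace (Gd u) with (scal (- (3 * u ^ 2) / (2 * sqrt (1 - u ^ 3))) (fa (sqrt (1 - u ^ 3)))).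
  exact Hc.
  unfold fa. rewrite pow2_sqrt by lra. replace (1 - (1 - u^3)) with (u^3) by ring.
  rewrite Rpower_u3 by lra. unfold Gd. pose proof (sqrt_lt_R0 u). unfold scal; simpl; unfold mult; simpl.
  replace (u * (u * (u * 1))) with (u^3) by ring. field.
  split; [lra|]. split; [|lra]. specialize (H ltac:(lra)). lra.
Qed.

Definition rqd (u : R) : R := 2 * wq u * Kq u / (Dq u)^2.

Lemma rq_derive u : 0 <= u <= 1 -> is_derive rq u (rqd u).
Proof.
  intros Hu. pose proof (Dq_pos u Hu). unfold rq, rqd, wq, Dq, Kq.
  auto_derive. unfold Dq in H. lra. unfold Dq in H. field. lra.
Qed.

Lemma key_poly u : Dq u ^ 3 - wq u ^ 6 = u * (1 - u^3) * Kq u ^ 2.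
Proof. unfold Dq, wq, Kq. field. Qed.
Lemma sqrt_r u : 0 <= u <= 1 -> sqrt (rq u) = Rabs (wq u) / sqrt (Dq u).
Proof.
  intros Hu. pose proof (Dq_pos u Hu).
  assert (Hc : 0 < sqrt (Dq u)) by (apply sqrt_lt_R0; lra).
  rewrite <- (sqrt_pow2 (Rabs (wq u) / sqrt (Dq u))).
  - f_equal. unfold rq. unfold Rdiv. rewrite Rpow_mult_distr, pow2_abs, <- Rinv_pow by lra.
    rewrite pow2_sqrt by lra. reflexivity.
  - unfold Rdiv. apply Rmult_le_pos. apply Rabs_pos. left; apply Rinv_0_lt_compat; auto.
Qed.

Lemma sqrt_1r u : 0 <= u <= 1 ->
  sqrt (1 - rq u ^ 3) = sqrt u * sqrt (1 - u^3) * Kq u / (sqrt (Dq u))^3.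
Proof.
  intros Hu. pose proof (Dq_pos u Hu). pose proof (Kq_pos u Hu).
  assert (Hu3 : u^3 <= 1) by (replace 1 with (1^3) by ring; apply pow_incr; lra).
  assert (Hc : 0 < sqrt (Dq u)) by (apply sqrt_lt_R0; lra).
  rewrite <- (sqrt_pow2 (sqrt u * sqrt (1 - u^3) * Kq u / (sqrt (Dq u))^3)).
  - f_equal. unfold Rdiv. rewrite !Rpow_mult_distr, <- Rinv_pow by (apply pow_nonzero; lra).
    rewrite !pow2_sqrt by lra.
    replace ((sqrt (Dq u) ^ 3) ^ 2) with ((sqrt (Dq u) ^ 2) ^ 3) by ring.
    rewrite pow2_sqrt by lra.
    unfold rq. apply Rminus_diag_uniq.
    replace (1 - (wq u ^ 2 / Dq u) ^ 3 - u * (1 - u ^ 3) * Kq u ^ 2 * / Dq u ^ 3)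
      with ((Dq u ^ 3 - wq u ^ 6 - u * (1 - u ^ 3) * Kq u ^ 2) / Dq u ^ 3) by (field; lra).
    rewrite key_poly. unfold Rdiv. ring.
  - unfold Rdiv. apply Rmult_le_pos. apply Rmult_le_pos. apply Rmult_le_pos; apply sqrt_pos. lra.
    left; apply Rinv_0_lt_compat. apply pow_lt; auto.
Qed.

Lemma rq_pos u : 0 <= u <= 1 -> u <> ustar -> 0 < rq u.
Proof.
  intros Hu Hne. pose proof (Dq_pos u Hu). unfold rq.
  assert (0 < wq u ^ 2).
  { destruct (Rlt_dec ustar u). pose proof (wq_pos u r). nra.
    assert (u < ustar) by lra. pose proof (wq_neg u). nra. }
  unfold Rdiv. apply Rmult_lt_0_compat; auto. apply Rinv_0_lt_compat; lra.
Qed.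

Lemma Hd_identity u : 0 < u < 1 -> u <> ustar ->
  rqd u * Gd (rq u) = 2 * Gd u * (wq u / Rabs (wq u)).
Proof.
  intros Hu Hne. assert (Hu' : 0 <= u <= 1) by lra.
  pose proof (Dq_pos u Hu'). pose proof (Kq_pos u Hu').
  assert (Hw : wq u <> 0).
  { destruct (Rlt_dec ustar u). pose proof (wq_pos u r). lra.
    assert (u < ustar) by lra. pose proof (wq_neg u). lra. }
  assert (Hu3 : u^3 < 1) by (apply cube_lt1; lra).
  unfold Gd at 1. rewrite sqrt_r, sqrt_1r by auto.
  unfold Gd, rqd.
  assert (Ha : 0 < sqrt u) by (apply sqrt_lt_R0; lra).
  assert (Hb : 0 < sqrt (1 - u^3)) by (apply sqrt_lt_R0; lra).
  assert (Hc : 0 < sqrt (Dq u)) by (apply sqrt_lt_R0; lra).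
  assert (Hc2 : Dq u = sqrt (Dq u) ^ 2) by (rewrite pow2_sqrt; lra).
  assert (Habs : 0 < Rabs (wq u)) by (apply Rabs_pos_lt; auto).
  set (a := sqrt u) in *. set (b := sqrt (1 - u^3)) in *. set (c := sqrt (Dq u)) in *.
  rewrite Hc2. field. repeat split; lra.
Qed.

Lemma mvt0 f a b : a <= b -> (forall x, a < x < b -> is_derive f x 0) ->
  (forall x, a <= x <= b -> continuity_pt f x) -> f b = f a.
Proof.
  intros Hab Hd Hc.
  destruct (MVT_gen f a b (fun _ => 0)) as [c [_ E]].
  - intros x Hx. rewrite Rmin_left in Hx by auto. rewrite Rmax_right in Hx by auto. apply Hd; lra.
  - intros x Hx. rewrite Rmin_left in Hx by auto. rewrite Rmax_right in Hx by auto. apply Hc; lra.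
  - lra.
Qed.

Lemma ex_derive_cont f x : ex_derive f x -> continuity_pt f x.
Proof. intros [l H]. eapply derive_cont; eauto. Qed.

Lemma G_cont u : 0 <= u <= 1 -> continuity_pt G u.
Proof.
  intros Hu. unfold G.
  assert (Hu3 : u^3 <= 1) by (replace 1 with (1^3) by ring; apply pow_incr; lra).
  assert (H3 : 0 <= u^3) by (apply pow_le; lra).
  apply (continuity_pt_comp (fun u => sqrt (1 - u^3)) F2 u).
  - apply (continuity_pt_comp (fun u => 1 - u^3) sqrt u).
    + apply ex_derive_cont. auto_derive. auto.
    + apply continuity_pt_sqrt. lra.
  - apply F2_cont. split.
    + pose proof (sqrt_pos (1 - u^3)). lra.
    + assert (sqrt (1 - u^3) <= sqrt 1) by (apply sqrt_le_1_alt; lra). rewrite sqrt_1 in H. auto.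
Qed.

Lemma Gr_cont u : 0 <= u <= 1 -> continuity_pt (fun u => G (rq u)) u.
Proof.
  intros Hu. apply (continuity_pt_comp rq G u).
  - apply ex_derive_cont. eexists. apply rq_derive; auto.
  - apply G_cont. apply rq_range; auto.
Qed.

Lemma Gr_derive u : 0 < u < 1 -> u <> ustar -> is_derive (fun u => G (rq u)) u (rqd u * Gd (rq u)).
Proof.
  intros Hu Hne.
  assert (Hr : 0 < rq u < 1) by (split; [apply rq_pos; lra| apply rq_lt1; auto]).
  pose proof (is_derive_comp G rq u _ _ (G_derive (rq u) Hr) (rq_derive u ltac:(lra))) as Hc.
  exact Hc.
Qed.

Lemma C1 u : ustar <= u <= 1 -> G (rq u) = 2 * G u.
Proof.
  intros Hu. pose proof ustar_range.
  assert (E : (fun u => G (rq u) - 2 * G u) 1 = (fun u => G (rq u) - 2 * G u) u).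
  { apply (mvt0 (fun u => G (rq u) - 2 * G u) u 1); [lra| |].
    - intros x Hx.
      assert (Hx' : 0 < x < 1) by lra. assert (Hne : x <> ustar) by lra.
      pose proof (Gr_derive x Hx' Hne) as A. pose proof (G_derive x Hx') as B.
      pose proof (Hd_identity x Hx' Hne) as I.
      rewrite Rabs_right in I by (left; apply wq_pos; lra).
      replace (wq x / wq x) with 1 in I by (field; pose proof (wq_pos x); lra).
      replace 0 with (rqd x * Gd (rq x) - 2 * Gd x) by lra.
      apply (is_derive_minus (fun u => G (rq u)) (fun u => 2 * G u)); auto.
      replace (2 * Gd x) with (scal 2 (Gd x)) by reflexivity.
      apply (is_derive_scal G x 2 (Gd x)); auto.
    - intros x Hx. apply continuity_pt_minus. apply Gr_cont; lra.
      apply continuity_pt_scal. apply G_cont; lra. }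
  simpl in E. rewrite rq_1, G_1 in E. lra.
Qed.

Lemma L_half : L = 2 * G ustar.
Proof. pose proof ustar_range. rewrite <- (C1 ustar) by lra. rewrite rq_ustar, G_0. auto. Qed.

Lemma C2 u : 0 <= u <= ustar -> G (rq u) + 2 * G u = 2 * L.
Proof.
  intros Hu. pose proof ustar_range.
  assert (E : (fun u => G (rq u) + 2 * G u) ustar = (fun u => G (rq u) + 2 * G u) u).
  { apply (mvt0 (fun u => G (rq u) + 2 * G u) u ustar); [lra| |].
    - intros x Hx.
      assert (Hx' : 0 < x < 1) by lra. assert (Hne : x <> ustar) by lra.
      pose proof (Gr_derive x Hx' Hne) as A. pose proof (G_derive x Hx') as B.
      pose proof (Hd_identity x Hx' Hne) as I.
      assert (Hw : wq x < 0) by (apply wq_neg; lra).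
      rewrite Rabs_left in I by auto.
      replace (wq x / - wq x) with (-1) in I by (field; lra).
      replace 0 with (rqd x * Gd (rq x) + 2 * Gd x) by lra.
      apply (is_derive_plus (fun u => G (rq u)) (fun u => 2 * G u)); auto.
      replace (2 * Gd x) with (scal 2 (Gd x)) by reflexivity.
      apply (is_derive_scal G x 2 (Gd x)); auto.
    - intros x Hx. apply continuity_pt_plus. apply Gr_cont; lra.
      apply continuity_pt_scal. apply G_cont; lra. }
  simpl in E. rewrite rq_ustar, G_0 in E. pose proof L_half. lra.
Qed.
Lemma u_facts s : 0 <= s <= 1 ->
  let u := rpow (1 - s^2) (1/3) in 0 <= u <= 1 /\ u^3 = 1 - s^2.
Proof.
  intros Hs u. unfold u, rpow. destruct (Rlt_dec 0 (1 - s^2)) as [H|H].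
  - assert (E : Rpower (1 - s^2) (1/3) ^ 3 = 1 - s^2).
    { rewrite <- Rpower_pow by apply Rpower_pos. rewrite Rpower_mult.
      replace (1/3 * INR 3) with 1 by (simpl; field). apply Rpower_1; auto. }
    pose proof (Rpower_pos (1 - s^2) (1/3)).
    split; auto. split; [lra|]. set (v := Rpower (1 - s^2) (1/3)) in *.
    destruct (Rle_dec v 1); auto. assert (1 < v^3) by (simpl; nra). nra.
  - assert (s = 1) by nra. subst s. split; [lra|]. ring.
Qed.

Lemma cos_fact x : 0 <= x <= L ->
  let s := sin_pq (6/5) 2 x in
  s^2 * rpow (cos_pq (6/5) 2 x) (2/5) = s^2 * rpow (1 - s^2) (1/3).
Proof.
  intros Hx s. pose proof L_ge1.
  assert (Es : s = sb x) by (apply sin_pq_sb; auto).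
  destruct (sb_spec x Hx) as [Hs Fs]. rewrite <- Es in Hs, Fs. clearbody s.
  destruct (Req_dec x 0) as [E0|E0].
  { assert (s = 0) by (apply F2_inj; try lra; rewrite F2_0; lra). rewrite H0. ring. }
  destruct (Req_dec x L) as [EL|EL].
  { assert (s = 1) by (apply F2_inj; try lra; rewrite F2_1; lra). rewrite EL, cos_top, H0.
    unfold rpow. destruct (Rlt_dec 0 0); [lra|]. destruct (Rlt_dec 0 (1 - 1^2)); [lra|]. ring. }
  destruct (cos_interior x) as [Ec Hs']; [lra|]. rewrite <- Es in Ec, Hs'.
  rewrite Ec. f_equal.
  unfold rpow. destruct (Rlt_dec 0 (1 - s^2)); [|nra].
  destruct (Rlt_dec 0 (/ fa s)) as [Hp|Hp]; [|exfalso; apply Hp; apply Rinv_0_lt_compat, fa_pos].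
  unfold fa. rewrite Rpower_Ropp, Rinv_inv, Rpower_mult. f_equal. field.
Qed.

Theorem theorem1p2 :
  forall x : R, 0 <= x <= pi_pq (6/5) 2 / 2 ->
    sin_pq (6/5) 2 (2 * x) =
    sqrt (1 - ((9 - 8 * (sin_pq (6/5) 2 x) ^ 2
                  - 4 * (sin_pq (6/5) 2 x) ^ 2 * rpow (cos_pq (6/5) 2 x) (2/5))
               / (9 - 8 * (sin_pq (6/5) 2 x) ^ 2
                  + 8 * (sin_pq (6/5) 2 x) ^ 2 * rpow (cos_pq (6/5) 2 x) (2/5))) ^ 3).
Proof.
  intros x Hx0. rewrite Ppq in Hx0.
  assert (Hx : 0 <= x <= L) by lra. clear Hx0. pose proof L_ge1 as HL.
  pose proof (cos_fact x Hx) as Hc. cbv zeta in Hc.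
  set (s := sin_pq (6/5) 2 x) in *.
  assert (Es : s = sb x) by (apply sin_pq_sb; auto).
  destruct (sb_spec x Hx) as [Hs Fs]. rewrite <- Es in Hs, Fs.
  destruct (u_facts s Hs) as [Hu Hu3].
  set (u := rpow (1 - s^2) (1/3)) in *.
  replace (4 * s ^ 2 * rpow (cos_pq (6 / 5) 2 x) (2 / 5)) with (4 * (s ^ 2 * rpow (cos_pq (6 / 5) 2 x) (2 / 5))) by ring.
  replace (8 * s ^ 2 * rpow (cos_pq (6 / 5) 2 x) (2 / 5)) with (8 * (s ^ 2 * rpow (cos_pq (6 / 5) 2 x) (2 / 5))) by ring.
  rewrite Hc.
  replace (9 - 8 * s ^ 2 - 4 * (s ^ 2 * u)) with (wq u ^ 2) by (unfold wq; replace (s^2) with (1 - u^3) by lra; ring).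
  replace (9 - 8 * s ^ 2 + 8 * (s ^ 2 * u)) with (Dq u) by (unfold Dq; replace (s^2) with (1 - u^3) by lra; ring).
  fold (rq u).
  assert (HG : G u = x).
  { unfold G. replace (1 - u^3) with (s^2) by lra. rewrite sqrt_pow2 by lra. auto. }
  set (S := sqrt (1 - rq u ^ 3)).
  assert (HS : 0 <= S <= 1).
  { pose proof (rq_range u Hu). assert (0 <= rq u ^ 3 <= 1).
    { split. apply pow_le; lra. replace 1 with (1^3) by ring. apply pow_incr; lra. }
    split. apply sqrt_pos. unfold S.
    assert (sqrt (1 - rq u ^ 3) <= sqrt 1) by (apply sqrt_le_1_alt; lra). rewrite sqrt_1 in H1. auto. }
  assert (HGS : G (rq u) = F2 S) by reflexivity.
  destruct (Rle_dec ustar u) as [Hst|Hst].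
  - pose proof (C1 u ltac:(lra)) as E. rewrite HGS, HG in E.
    pose proof (F2_le_L S HS).
    rewrite sin_pq_sb by lra. rewrite <- E. apply sbF; auto.
  - pose proof (C2 u ltac:(lra)) as E. rewrite HGS, HG in E.
    pose proof (F2_le_L S HS). pose proof (F2_ge0 S HS).
    destruct (Req_dec x L) as [EL|EL].
    + rewrite EL, sin_pq_2L. symmetry.
      apply F2_inj; try lra. rewrite F2_0. lra.
    + rewrite sin_pq_eq by lra.
      destruct (Rle_dec (2 * x) L).
      * replace (2 * x) with (F2 S) by lra. apply sbF; auto.
      * replace (2 * L - 2 * x) with (F2 S) by lra. apply sbF; auto.
Qed.
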